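(* Let $C\in\mathbb{R}^{d\times d}$ be symmetric positive-definite, $\mu_0=\mathcal{N}(0,C)$, and $\rho\colon\mathbb{R}^d\to(0,\infty)$ measurable. Assume there exist $\alpha\in(0,1/\sqrt2]$ and $R>0$ such that $B_{\alpha\|x\|}(0)\subseteq G_{\rho(x)}$ for all $x$ with $\|x\|>R$. Let $E$ be the transition kernel of elliptical slice sampling for $(\rho,\mu_0)$. Then there exist $\delta\in[0,1)$ and $L\in[0,\infty)$ such that $\int_{\mathbb{R}^d}\|y\|\,E(x,\mathrm{d}y)\le\delta\|x\|+L$ for all $x\in\mathbb{R}^d$.
   Context: $\|\cdot\|$ is the Euclidean norm, $B_r(y)=\{z:\|z-y\|\le r\}$, and $G_t=\{x\in\mathbb{R}^d:\rho(x)\ge t\}$ for $t\ge0$. Let $p(x,w,\theta)=\cos(\theta)x+\sin(\theta)w$. Elliptical slice sampling performs one transition from $x$ as follows: draw $w\sim\mu_0$; draw $t\sim\mathcal{U}[0,\rho(x)]$; draw $\theta\sim\mathcal{U}[0,2\pi]$ and set $\theta_{\min}=\theta-2\pi$, $\theta_{\max}=\theta$; while $p(x,w,\theta)\notin G_t$: if $\theta<0$ set $\theta_{\min}=\theta$, else set $\theta_{\max}=\theta$, and draw a new $\theta\sim\mathcal{U}[\theta_{\min},\theta_{\max}]$; output $y=p(x,w,\theta)$. All draws are independent; $E(x,A)$ is the probability that the output lies in $A$. *)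

(* Defs.v *)
From HB Require Import structures.
From mathcomp Require Import all_boot all_order all_algebra.
From mathcomp Require Import all_classical all_reals all_analysis.

Set Implicit Arguments.
Unset Strict Implicit.
Unset Printing Implicit Defensive.

Import Order.TTheory GRing.Theory Num.Theory.
Import numFieldNormedType.Exports.

Local Open Scope classical_set_scope.
Local Open Scope ring_scope.

(* generated by the coordinate projections (= product = Borel sigma-algebra) *)
Definition rV_measure_display : measure_display -> measure_display.
Proof. exact. Qed.

Section measurable_rV.
Context {R : realType} (d : nat).

Definition rV_coord : 'I_d -> 'rV[R]_d -> R := fun i x => x ord0 i.

Let rV_set0 : g_sigma_preimage rV_coord set0.
Proof. exact: sigma_algebra0. Qed.

Let rV_setC A : g_sigma_preimage rV_coord A -> g_sigma_preimage rV_coord (~` A).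
Proof. exact: sigma_algebraC. Qed.

Let rV_bigcup (F : _^nat) : (forall i, g_sigma_preimage rV_coord (F i)) ->
  g_sigma_preimage rV_coord (\bigcup_i (F i)).
Proof. exact: sigma_algebra_bigcup. Qed.

HB.instance Definition _ := @isMeasurable.Build
  (rV_measure_display default_measure_display)
  'rV[R]_d (g_sigma_preimage rV_coord) rV_set0 rV_setC rV_bigcup.
End measurable_rV.

Section ess.
Context {R : realType}.
Local Notation leb := (@lebesgue_measure R).

Definition enorm d (x : 'rV[R]_d) : R := Num.sqrt (\sum_(i < d) x ord0 i ^+ 2).

Definition eball d (y : 'rV[R]_d) (r : R) : set 'rV[R]_d :=
  [set z | enorm (z - y) <= r].

Definition Glevel d (rho : 'rV[R]_d -> R) (t : R) : set 'rV[R]_d :=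
  [set x | t <= rho x].

Definition sym_posdef d (C : 'M[R]_d) : Prop :=
  C^T = C /\ forall v : 'rV[R]_d, v != 0 -> 0 < (v *m C *m v^T) ord0 ord0.

Fixpoint iter_leb_int (n : nat) (f : (nat -> R) -> \bar R) : \bar R :=
  match n with
  | 0%N => f (fun _ => 0)
  | n'.+1 => (\int[leb]_(u in [set: R])
                iter_leb_int n' (fun v => f (fun k => if k == n' then u else v k)))%E
  end.

Definition leb_int_rV d (f : 'rV[R]_d -> \bar R) : \bar R :=
  iter_leb_int d (fun v => f (\row_(i < d) v (nat_of_ord i))).

Definition gauss_density d (C : 'M[R]_d) (w : 'rV[R]_d) : R :=
  (Num.sqrt ((pi *+ 2) ^+ d * \det C))^-1 *
  expR (- ((w *m invmx C *m w^T) ord0 ord0) / 2).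

Definition gauss_int d (C : 'M[R]_d) (f : 'rV[R]_d -> \bar R) : \bar R :=
  leb_int_rV (fun w => ((gauss_density C w)%:E * f w)%E).

Definition ellipse d (x w : 'rV[R]_d) (theta : R) : 'rV[R]_d :=
  cos theta *: x + sin theta *: w.

(* Shrinkage loop with current bracket [a, b], at most n further draws:
   expected value of f(output), counting only runs terminating within n draws. *)
Fixpoint shrink d (rho : 'rV[R]_d -> R) (x w : 'rV[R]_d) (t : R)
    (f : 'rV[R]_d -> \bar R) (n : nat) (a b : R) : \bar R :=
  match n with
  | 0%N => 0%E
  | n'.+1 =>
    (((b - a)^-1)%R%:E *
     \int[leb]_(th in [set` `[a, b]])
        (if (t <= rho (ellipse x w (th : R)))%R then f (ellipse x w th)
         else if (th < 0 :> R)%R then shrink rho x w t f n' th b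
         else shrink rho x w t f n' a th))%E
  end.

(* first draw theta ~ U[0, 2pi], bracket [theta - 2pi, theta];
   at most n.+1 draws in total *)
Definition ess_run d (rho : 'rV[R]_d -> R) (x w : 'rV[R]_d) (t : R)
    (f : 'rV[R]_d -> \bar R) (n : nat) : \bar R :=
  (((pi *+ 2)^-1)%R%:E *
   \int[leb]_(th in [set` `[0%R, (pi *+ 2)%R]])
      (if (t <= rho (ellipse x w (th : R)))%R then f (ellipse x w th)
       else shrink rho x w t f n (th - pi *+ 2)%R th))%E.

(* integral of nonnegative f against E(x, .), the ESS transition kernel:
   E[f(y)] with w ~ mu0, t ~ U[0, rho x], and the (terminating) shrinkage
   loop, as the supremum over the number of allowed loop iterations. *)
Definition ess_kernel_int d (C : 'M[R]_d) (rho : 'rV[R]_d -> R)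
    (x : 'rV[R]_d) (f : 'rV[R]_d -> \bar R) : \bar R :=
  gauss_int C (fun w =>
    (((rho x)^-1)%R%:E *
     \int[leb]_(t in [set` `[0%R, rho x]])
        ereal_sup (range (fun n => ess_run rho x w t f n)))%E).

End ess.

(* Main.v *)
Require Import Defs.
From HB Require Import structures.
From mathcomp Require Import all_boot all_order all_algebra.
From mathcomp Require Import all_classical all_reals all_analysis.
From mathcomp Require Import ring lra.
From mathcomp Require Import measurable_realfun.
Import Order.TTheory GRing.Theory Num.Theory.
Import numFieldNormedType.Exports.
Local Open Scope classical_set_scope.
Local Open Scope ring_scope.

Section aux.
Context {R : realType}.
Local Notation leb := (@lebesgue_measure R).
Lemma le_int_ge0 dd (T : measurableType dd) (mu : {measure set T -> \bar R})
  (D : set T) (f g : T -> \bar R) :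
  (forall x, D x -> (0 <= f x)%E) -> (forall x, D x -> (f x <= g x)%E) ->
  (\int[mu]_(x in D) f x <= \int[mu]_(x in D) g x)%E.
Proof.
move=> f0 fg.
have g0 : forall x, D x -> (0 <= g x)%E.
  by move=> x Dx; exact: le_trans (f0 _ Dx) (fg _ Dx).
rewrite (ge0_integralE _ f0) (ge0_integralE _ g0).
apply: ereal_sup_le => _ [h /= hf <-]; exists h => //= x.
apply: (le_trans (hf x)); rewrite /patch; case: ifP => // /[!inE] Dx; exact: fg.
Qed.

Lemma iter_ge0 n (f : (nat -> R) -> \bar R) :
  (forall v, (0 <= f v)%E) -> (0 <= iter_leb_int n f)%E.
Proof.
elim: n f => [|n IH] f f0 /=; first exact: f0.
by apply: integral_ge0 => u _; exact: IH.
Qed.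

Lemma iter_le n (f g : (nat -> R) -> \bar R) :
  (forall v, (0 <= f v)%E) -> (forall v, (f v <= g v)%E) ->
  (iter_leb_int n f <= iter_leb_int n g)%E.
Proof.
elim: n f g => [|n IH] f g f0 fg /=; first exact: fg.
apply: le_int_ge0 => u _; first exact: iter_ge0.
exact: IH.
Qed.

Definition vcons (u : R) (v : nat -> R) : nat -> R :=
  fun k => if k is k'.+1 then v k' else u.

Lemma iter_S n f : iter_leb_int n.+1 f =
  (\int[leb]_(u in [set: R])
     iter_leb_int n (fun v => f (fun k => if k == n then u else v k)))%E.
Proof. by []. Qed.

Lemma iter_cons n f : iter_leb_int n.+1 f =
  iter_leb_int n (fun v => (\int[leb]_(u in [set: R]) f (vcons u v))%E).
Proof.
elim: n f => [|n IH] f.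
  by rewrite /=; apply: eq_integral => u _; congr f; apply/funext => -[|k].
rewrite [LHS]iter_S.
under eq_integral do rewrite IH.
rewrite [RHS]iter_S; apply: eq_integral => u _.
congr iter_leb_int; apply/funext => v; apply: eq_integral => u' _.
by congr f; apply/funext => -[|k].
Qed.

Lemma sqrt_le (S T : R) : 0 <= T -> S <= T ^+ 2 -> Num.sqrt S <= T.
Proof.
move=> T0 ST; rewrite -(ger0_norm T0) -sqrtr_sqr ler_sqrt //; exact: sqr_ge0.
Qed.

Lemma le_sqrt (u v : R) : 0 <= v -> u ^+ 2 <= v -> u <= Num.sqrt v.
Proof.
move=> v0 uv; apply: (le_trans (ler_norm u)); rewrite -sqrtr_sqr ler_sqrt //.
Qed.

Lemma sum_sqr_le (n : nat) (a : 'I_n -> R) : (forall i, 0 <= a i) ->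
  \sum_i a i ^+ 2 <= (\sum_i a i) ^+ 2.
Proof.
move=> a0.
suff [] : (\sum_i a i ^+ 2 <= (\sum_i a i) ^+ 2) /\ 0 <= \sum_i a i by [].
apply: (big_ind2 (fun x y => x <= y ^+ 2 /\ 0 <= y)).
- by rewrite expr0n /=.
- move=> x1 x2 y1 y2 [h1 h2] [h3 h4]; split; last exact: addr_ge0.
  nra.
- by move=> i _; split => //; exact: a0.
Qed.

Lemma cauchy_schwarz (n : nat) (a b : 'I_n -> R) :
  (\sum_i a i * b i) ^+ 2 <= (\sum_i a i ^+ 2) * (\sum_i b i ^+ 2).
Proof.
rewrite -subr_ge0.
have E : \sum_i \sum_j (a i * b j - a j * b i) ^+ 2 =
   \sum_i \sum_j (a i ^+ 2 * b j ^+ 2) + \sum_i \sum_j (a j ^+ 2 * b i ^+ 2)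
   - (\sum_i \sum_j (a i * b i) * (a j * b j)) *+ 2.
  rewrite -sumrMnl -big_split -sumrB /=; apply: eq_bigr => i _.
  rewrite -sumrMnl -big_split -sumrB /=; apply: eq_bigr => j _.
  by rewrite mulr2n; ring.
rewrite [X in _ = _ + X - _]exchange_big /= in E.
have E1 : (\sum_i a i ^+ 2) * (\sum_i b i ^+ 2) = \sum_i \sum_j (a i ^+ 2 * b j ^+ 2).
  by rewrite big_distrlr.
have E2 : (\sum_i a i * b i) ^+ 2 = \sum_i \sum_j (a i * b i) * (a j * b j).
  by rewrite expr2 big_distrlr.
have -> : (\sum_i a i ^+ 2) * (\sum_i b i ^+ 2) - (\sum_i a i * b i) ^+ 2 =
   (\sum_i \sum_j (a i * b j - a j * b i) ^+ 2) / 2.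
  by rewrite E E1 E2 mulr2n; field.
apply: divr_ge0 => //; apply: sumr_ge0 => i _; apply: sumr_ge0 => j _.
exact: sqr_ge0.
Qed.

Lemma enorm_ge0 d (x : 'rV[R]_d) : 0 <= enorm x.
Proof. exact: sqrtr_ge0. Qed.

Lemma enormD d (x y : 'rV[R]_d) : enorm (x + y) <= enorm x + enorm y.
Proof.
rewrite /enorm; apply: sqrt_le; first by rewrite addr_ge0 ?sqrtr_ge0.
set Sx := \sum_(i < d) x ord0 i ^+ 2; set Sy := \sum_(i < d) y ord0 i ^+ 2.
have Sx0 : 0 <= Sx by apply: sumr_ge0 => i _; exact: sqr_ge0.
have Sy0 : 0 <= Sy by apply: sumr_ge0 => i _; exact: sqr_ge0.
have -> : \sum_(i < d) (x + y) ord0 i ^+ 2 = Sx + (\sum_i x ord0 i * y ord0 i) *+ 2 + Sy.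
  rewrite /Sx /Sy -sumrMnl -!big_split /=; apply: eq_bigr => i _.
  by rewrite mxE mulr2n; ring.
have CS : \sum_i x ord0 i * y ord0 i <= Num.sqrt Sx * Num.sqrt Sy.
  rewrite -sqrtrM //; apply: le_sqrt; first exact: mulr_ge0.
  exact: cauchy_schwarz.
rewrite sqrrD !sqr_sqrtr //.
apply: lerD => //; apply: lerD => //.
by rewrite lerMn2r CS orbT.
Qed.


Lemma enormZ d (a : R) (x : 'rV[R]_d) : enorm (a *: x) = `|a| * enorm x.
Proof.
rewrite /enorm -sqrtr_sqr -sqrtrM ?sqr_ge0 //; congr Num.sqrt.
rewrite mulr_sumr; apply: eq_bigr => i _; by rewrite mxE exprMn.
Qed.

Lemma enorm_l1 d (x : 'rV[R]_d) : enorm x <= \sum_i `|x ord0 i|.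
Proof.
apply: sqrt_le; first by apply: sumr_ge0 => i _.
rewrite (eq_bigr (fun i => `|x ord0 i| ^+ 2)); first exact: sum_sqr_le.
by move=> i _; rewrite real_normK ?num_real.
Qed.

Lemma enorm_ell d (x w : 'rV[R]_d) th :
  enorm (ellipse x w th) <= `|cos th| * enorm x + `|sin th| * enorm w.
Proof. by rewrite /ellipse; apply: (le_trans (enormD _ _ _)); rewrite !enormZ. Qed.

Lemma enorm_ell_le d (x w : 'rV[R]_d) th :
  enorm (ellipse x w th) <= enorm x + enorm w.
Proof.
apply: (le_trans (enorm_ell _ _ _ _)).
apply: lerD; rewrite ler_piMl ?enorm_ge0 ?cos_max ?sin_max //.
Qed.

Definition gf (c b u : R) : R := expR (- (c * (u + b) ^+ 2) / 2).
Definition gs (c : R) : R := Num.sqrt (pi *+ 2 / c).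

Lemma gf_normal c b : 0 < c -> gf c b = normal_fun (- b) (Num.sqrt c)^-1.
Proof.
move=> c0; apply/funext => u; rewrite /gf /normal_fun opprK exprVn sqr_sqrtr ?ltW //.
congr expR; rewrite -mulr_natr; field; exact: lt0r_neq0.
Qed.

Lemma measurable_gf c b : 0 < c -> measurable_fun [set: R] (gf c b).
Proof. by move=> c0; rewrite gf_normal //; exact: measurable_normal_fun. Qed.

Lemma gf_ge0 c b u : 0 <= gf c b u.
Proof. exact: expR_ge0. Qed.

Lemma gs_ge0 c : 0 <= gs c.
Proof. exact: sqrtr_ge0. Qed.

Lemma mEFin (g : R -> R) : measurable_fun setT g ->
  measurable_fun [set: R] (EFin \o g).
Proof. by move=> mg; apply/measurable_EFinP. Qed.

Lemma gf_integral c b : 0 < c ->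
  (\int[leb]_(u in [set: R]) (gf c b u)%:E)%E = (gs c)%:E.
Proof.
move=> c0.
set s := (Num.sqrt c)^-1.
have s0 : s != 0 by rewrite invr_eq0 sqrtr_eq0 -ltNge.
have H := integral_normal_pdf (- b) s.
rewrite normal_pdfE // in H.
have H2 : ((normal_peak s)%:E * \int[leb]_(x in [set: R]) (normal_fun (- b) s x)%:E)%E = 1%E.
  rewrite -ge0_integralZl //=.
  - exact: mEFin (measurable_normal_fun _ _).
  - by move=> x _; rewrite lee_fin normal_fun_ge0.
  - by rewrite lee_fin normal_peak_ge0.
have pk0 : normal_peak s != 0 by rewrite gt_eqF // normal_peak_gt0.
have -> : (\int[leb]_(u in [set: R]) (gf c b u)%:E)%E =
   ((normal_peak s)^-1%:E * ((normal_peak s)%:E * \int[leb]_(x in [set: R]) (normal_fun (- b) s x)%:E))%E.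
  rewrite muleA -EFinM mulVf // mul1e gf_normal //.
rewrite H2 mule1; congr EFin.
rewrite /normal_peak invrK /gs /s exprVn sqr_sqrtr ?ltW //; congr Num.sqrt.
by rewrite -mulrnAr mulrC.
Qed.

Definition Mc (c : R) : R := 1 + 8 / (3 * c).

Lemma gf_abs_pt c b u : 0 < c ->
  gf c b u * `|u + b| <= Mc c * gf (c / 4) b u.
Proof.
move=> c0; rewrite /gf /Mc.
set y := u + b; set a := 3 * c / 8.
have a0 : 0 < a by rewrite /a; apply: divr_gt0 => //; rewrite mulr_gt0.
have -> : - (c * y ^+ 2) / 2 = - (c / 4 * y ^+ 2) / 2 + - (a * y ^+ 2).
  by rewrite /a; field.
rewrite expRD -mulrA [X in _ <= X]mulrC ler_wpM2l ?expR_ge0 //.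
have t0 : 0 <= `|y| by [].
have ty : `|y| ^+ 2 = y ^+ 2 by rewrite real_normK ?num_real.
have E1 := expR_ge1Dx (a * y ^+ 2).
have Hy : `|y| <= (1 + 8 / (3 * c)) * (1 + a * y ^+ 2).
  have -> : 8 / (3 * c) = a^-1.
    by rewrite /a; field; exact: lt0r_neq0.
  have aai : a^-1 * a = 1 by rewrite mulVf ?gt_eqF.
  rewrite -ty.
  have -> : (1 + a^-1) * (1 + a * `|y| ^+ 2) = 1 + a * `|y| ^+ 2 + a^-1 + `|y| ^+ 2.
    by rewrite mulrDl mul1r mulrDr mulr1 [a^-1 * (a * _)]mulrA aai mul1r !addrA.
  have : 0 <= a * `|y| ^+ 2 by apply: mulr_ge0; [exact: ltW | exact: sqr_ge0].
  have : 0 <= a^-1 by rewrite invr_ge0 ltW.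
  nra.
rewrite expRN mulrC ler_pdivrMr ?expR_gt0 //.
apply: (le_trans Hy); rewrite ler_wpM2l //.
by rewrite addr_ge0 // divr_ge0 // mulr_ge0 // ltW.
Qed.

Lemma gf_abs_integral c b : 0 < c ->
  (\int[leb]_(u in [set: R]) (gf c b u * `|u + b|)%:E <= (Mc c * gs (c / 4))%:E)%E.
Proof.
move=> c0.
have c40 : 0 < c / 4 by rewrite divr_gt0.
have M0 : 0 <= Mc c by rewrite /Mc addr_ge0 // divr_ge0 // mulr_ge0 // ltW.
apply: (@le_trans _ _ (\int[leb]_(u in [set: R]) ((Mc c)%:E * (gf (c / 4) b u)%:E))%E).
  apply: le_int_ge0 => u _; first by rewrite lee_fin mulr_ge0 ?gf_ge0.
  by rewrite -EFinM lee_fin gf_abs_pt.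
rewrite ge0_integralZl //=.
- by rewrite gf_integral // -EFinM lexx.
- exact: mEFin (measurable_gf _ _ c40).
- by move=> u _; rewrite lee_fin gf_ge0.
Qed.

Definition quad n (P : 'M[R]_n) (v : nat -> R) : R :=
  ((\row_(i < n) v i) *m P *m (\row_(i < n) v i)^T) ord0 ord0.
Arguments quad {n}.

Lemma quadE n (P : 'M[R]_n) v : quad P v = \sum_(j < n) \sum_(i < n) v i * P i j * v j.
Proof.
rewrite /quad !mxE; apply: eq_bigr => j _; rewrite !mxE mulr_suml.
by apply: eq_bigr => i _; rewrite !mxE.
Qed.

Definition Bv n (P : 'M[R]_n.+1) (v : nat -> R) : R :=
  \sum_(j < n) P ord0 (lift ord0 j) * v j.
Definition Sm n (P : 'M[R]_n.+1) : 'M[R]_n :=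
  \matrix_(i, j) (P (lift ord0 i) (lift ord0 j)
     - P ord0 (lift ord0 i) * P ord0 (lift ord0 j) / P ord0 ord0).
Arguments Bv {n}.
Arguments Sm {n}.

Lemma vcons0 n u v : vcons u v (@ord0 n) = u. Proof. by []. Qed.
Lemma vconsS n u v (i : 'I_n) : vcons u v (lift ord0 i) = v i.
Proof. by rewrite lift0. Qed.

Lemma quad_recl n (P : 'M[R]_n.+1) u v : quad P (vcons u v) =
  u * P ord0 ord0 * u + \sum_(i < n) v i * P (lift ord0 i) ord0 * u
  + \sum_(j < n) (u * P ord0 (lift ord0 j) * v j
      + \sum_(i < n) v i * P (lift ord0 i) (lift ord0 j) * v j).
Proof.
rewrite quadE big_ord_recl big_ord_recl.
congr (_ + _ + _).
apply: eq_bigr => j _; rewrite big_ord_recl vconsS.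
by congr (_ + _); apply: eq_bigr => i _; rewrite vconsS.
Qed.

Lemma quad_cons n (P : 'M[R]_n.+1) u v : P^T = P -> P ord0 ord0 != 0 ->
  quad P (vcons u v) = P ord0 ord0 * (u + Bv P v / P ord0 ord0) ^+ 2 + quad (Sm P) v.
Proof.
move=> Ps c0.
have sym i j : P j i = P i j by rewrite -[in LHS]Ps mxE.
set c := P ord0 ord0.
set X := \sum_(j < n) \sum_(i < n) v i * P (lift ord0 i) (lift ord0 j) * v j.
have E1 : quad (Sm P) v = X - (Bv P v) ^+ 2 / c.
  have -> : (Bv P v) ^+ 2 / c = \sum_(j < n) \sum_(i < n)
      v i * (P ord0 (lift ord0 i) * P ord0 (lift ord0 j) / c) * v j.
    rewrite /Bv expr2 big_distrlr /= exchange_big mulr_suml; apply: eq_bigr => j _.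
    rewrite mulr_suml; apply: eq_bigr => i _; rewrite /c; ring.
  rewrite quadE /X -sumrB; apply: eq_bigr => j _.
  rewrite -sumrB; apply: eq_bigr => i _; rewrite mxE -/c; ring.
have E2 : \sum_(i < n) v i * P (lift ord0 i) ord0 * u = u * Bv P v.
  rewrite /Bv mulr_sumr; apply: eq_bigr => i _; rewrite sym; ring.
have E3 : \sum_(j < n) (u * P ord0 (lift ord0 j) * v j
      + \sum_(i < n) v i * P (lift ord0 i) (lift ord0 j) * v j) = u * Bv P v + X.
  rewrite big_split /=; congr (_ + _).
  rewrite /Bv mulr_sumr; apply: eq_bigr => j _; ring.
by rewrite quad_recl E2 E3 E1 /c; field.
Qed.

Lemma quad_e0 n (P : 'M[R]_n.+1) : quad P (vcons 1 (fun _ => 0)) = P ord0 ord0.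
Proof.
rewrite quad_recl big1 ?big1 ?mulr1 ?mul1r ?addr0 //.
  by move=> j _; rewrite mulr0 add0r big1 // => i _; rewrite mulr0.
by move=> i _; rewrite !mul0r.
Qed.

Definition posq n (P : 'M[R]_n) := forall v : nat -> R,
  (\row_(i < n) v i) != 0 -> 0 < quad P v.
Arguments posq {n}.

Lemma rowS_neq0 n (u : R) (v : nat -> R) : (\row_(i < n) v i) != 0 ->
  (\row_(i < n.+1) vcons u v i) != 0.
Proof.
move=> hv; apply/negP => /eqP H; move/negP: hv; apply; apply/eqP/rowP => i.
have := congr1 (fun M : 'rV[R]_n.+1 => M ord0 (lift ord0 i)) H.
by rewrite !mxE vconsS.
Qed.
Arguments rowS_neq0 {n} u {v}.

Lemma row_e0_neq0 n : (\row_(i < n.+1) vcons 1 (fun _ => 0) i) != 0 :> 'rV[R]_n.+1.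
Proof.
apply/negP => /eqP H.
have := congr1 (fun M : 'rV[R]_n.+1 => M ord0 ord0) H.
by rewrite !mxE /=; apply/eqP; rewrite oner_eq0.
Qed.

Lemma posq_c n (P : 'M[R]_n.+1) : posq P -> 0 < P ord0 ord0.
Proof. by move=> pP; rewrite -quad_e0; apply: pP; exact: row_e0_neq0. Qed.
Arguments posq_c {n P}.

Lemma Sm_sym n (P : 'M[R]_n.+1) : P^T = P -> (Sm P)^T = Sm P.
Proof.
move=> Ps; have sym i j : P j i = P i j by rewrite -[in LHS]Ps mxE.
by apply/matrixP => i j; rewrite !mxE [P (lift ord0 j) (lift ord0 i)]sym; congr (_ - _ / _); exact: mulrC.
Qed.

Lemma Sm_posq n (P : 'M[R]_n.+1) : P^T = P -> posq P -> posq (Sm P).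
Proof.
move=> Ps pP v hv.
have c0 := posq_c pP.
have := pP (vcons (- (Bv P v / P ord0 ord0)) v) (rowS_neq0 _ hv).
by rewrite quad_cons ?gt_eqF // addNr expr0n /= mulr0 add0r.
Qed.

Lemma Sm_det n (P : 'M[R]_n.+1) : P^T = P -> P ord0 ord0 != 0 ->
  \det P = P ord0 ord0 * \det (Sm P).
Proof.
move=> Ps c0; have sym i j : P j i = P i j by rewrite -[in LHS]Ps mxE.
set c := P ord0 ord0.
pose P' : 'M[R]_(1 + n) := P.
have l0 : lshift n (0 : 'I_1) = ord0 :> 'I_n.+1 by apply/val_inj.
have eul : ulsubmx P' = c%:M.
  by apply/matrixP => i j; rewrite !ord1 !mxE l0.
pose L : 'M[R]_(1 + n) := block_mx 1%:M 0 (c^-1 *: dlsubmx P') 1%:M.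
pose U : 'M[R]_(1 + n) := block_mx c%:M (ursubmx P') 0 (Sm P).
have eLU : P' = L *m U.
  rewrite /L /U mulmx_block ?mul1mx ?mul0mx ?mulmx0 ?addr0 ?add0r.
  rewrite -[LHS]submxK eul; congr block_mx.
    by rewrite -scalemxAl mul_mx_scalar scalerA mulVf // scale1r.
  apply/matrixP => i j; rewrite !mxE big_ord1 !mxE !rshift1 l0.
  by rewrite [P (lift ord0 i) ord0]sym -/c; field.
transitivity (\det (L *m U)); first by rewrite -eLU.
by rewrite det_mulmx /L /U det_lblock det_ublock !det1 det_scalar1 !mul1r.
Qed.

Lemma sum_cons n (k : 'I_n.+1 -> R) u (v : nat -> R) :
  \sum_(i < n.+1) k i * `|vcons u v i| =
  k ord0 * `|u| + \sum_(i < n) k (lift ord0 i) * `|v i|.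
Proof. by rewrite big_ord_recl. Qed.

Lemma GL n : forall (P : 'M[R]_n), P^T = P -> posq P ->
  forall k : 'I_n -> R, (forall i, 0 <= k i) ->
  exists K, 0 <= K /\ forall s A, 0 <= s -> 0 <= A ->
   (iter_leb_int n (fun v => (s * expR (- quad P v / 2) *
        (A + \sum_(i < n) k i * `|v i|))%:E)
     <= (s * Num.sqrt ((pi *+ 2) ^+ n / \det P) * (A + K))%:E)%E.
Proof.
elim: n => [|n IH] P Ps pP k k0.
  exists 0; split => // s A s0 A0 /=.
  rewrite quadE !big_ord0 det_mx00 expr0 divr1 sqrtr1 oppr0 mul0r expR0.
  exact: lexx.
have c0 := posq_c pP.
have Ss := Sm_sym _ _ Ps.
have Sp := Sm_posq _ _ Ps pP.
set c := P ord0 ord0 in c0 *.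
pose k' := fun i : 'I_n => k (lift ord0 i) + k ord0 * (`|P ord0 (lift ord0 i)| / c).
have k'0 : forall i, 0 <= k' i.
  by move=> i; rewrite /k' addr_ge0 // mulr_ge0 // divr_ge0 // ltW.
have [K' [K'0 HK']] := IH (Sm P) Ss Sp k' k'0.
have gs0 : 0 < gs c by rewrite sqrtr_gt0 divr_gt0 // mulrn_wgt0 // pi_gt0.
pose K1 := Mc c * gs (c / 4) / gs c.
have Mc0 : 0 <= Mc c by rewrite /Mc addr_ge0 // divr_ge0 // mulr_ge0 // ltW.
have K10 : 0 <= K1 by rewrite /K1 divr_ge0 ?gs_ge0 // mulr_ge0 // gs_ge0.
exists (k ord0 * K1 + K'); split; first by rewrite addr_ge0 // mulr_ge0.
move=> s A s0 A0.
rewrite iter_cons.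
apply: (@le_trans _ _ (iter_leb_int n (fun v => ((s * gs c) * expR (- quad (Sm P) v / 2) *
     ((A + k ord0 * K1) + \sum_(i < n) k' i * `|v i|))%:E))).
  apply: iter_le => v.
    apply: integral_ge0 => u _; rewrite lee_fin mulr_ge0 ?addr_ge0 ?mulr_ge0 ?expR_ge0 //.
    by apply: sumr_ge0 => i _; rewrite mulr_ge0.
  set q := quad (Sm P) v.
  set beta := Bv P v / c.
  set T := \sum_(i < n) k (lift ord0 i) * `|v i|.
  set S2 := \sum_(i < n) k' i * `|v i|.
  set Z := (\sum_(i < n) `|P ord0 (lift ord0 i)| * `|v i|) / c.
  have HS : S2 = T + k ord0 * Z.
    rewrite /S2 /k' /T /Z.
    rewrite (eq_bigr (fun i => k (lift ord0 i) * `|v i| +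
       k ord0 * (`|P ord0 (lift ord0 i)| * `|v i| / c))); last first.
      by move=> i _; rewrite mulrDl; congr (_ + _); rewrite mulrA; ring.
    rewrite big_split /=; congr (_ + _).
    by rewrite -mulr_sumr mulr_suml.
  have Hb : `|beta| <= Z.
    have ci0 : 0 <= c^-1 by rewrite invr_ge0 ltW.
    rewrite /beta /Z /Bv normrM (ger0_norm ci0) ler_wpM2r //.
    apply: le_trans (ler_norm_sum _ _ _) _.
    by apply: ler_sum => i _; rewrite normrM lexx.
  set e := expR (- q / 2).
  have e0 : 0 <= e by exact: expR_ge0.
  pose X := s * e * (A + S2).
  pose Y := s * e * k ord0.
  have S20 : 0 <= S2 by apply: sumr_ge0 => i _; rewrite mulr_ge0.
  have X0 : 0 <= X by rewrite /X !mulr_ge0 // addr_ge0.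
  have Y0 : 0 <= Y by rewrite /Y !mulr_ge0.
  have mabs : measurable_fun [set: R] (fun u : R => `|u + beta|).
    by apply: measurableT_comp; [exact: normr_measurable | exact: measurable_funD].
  have mg := measurable_gf c beta c0.
  have f10 : forall u, [set: R] u -> (0 <= X%:E * (gf c beta u)%:E)%E.
    by move=> u _; rewrite lee_fin mulr_ge0 // gf_ge0.
  have f20 : forall u, [set: R] u -> (0 <= Y%:E * (gf c beta u * `|u + beta|)%:E)%E.
    by move=> u _; rewrite lee_fin mulr_ge0 // mulr_ge0 // gf_ge0.
  have mf1 : measurable_fun [set: R] (fun u => (X%:E * (gf c beta u)%:E)%E).
    exact: mEFin (measurable_funM (measurable_cst _) mg).
  have mf2 : measurable_fun [set: R] (fun u => (Y%:E * (gf c beta u * `|u + beta|)%:E)%E).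
    exact: mEFin (measurable_funM (measurable_cst _) (measurable_funM mg mabs)).
  apply: (@le_trans _ _ (\int[leb]_(u in [set: R])
     (X%:E * (gf c beta u)%:E + Y%:E * (gf c beta u * `|u + beta|)%:E))%E).
    apply: le_int_ge0 => u _.
      rewrite lee_fin mulr_ge0 ?addr_ge0 ?mulr_ge0 ?expR_ge0 //.
      by apply: sumr_ge0 => i _; rewrite mulr_ge0.
    rewrite -!EFinM -EFinD lee_fin.
    rewrite (quad_cons _ _ u v Ps (lt0r_neq0 c0)) -/c -/beta -/q sum_cons -/T.
    have -> : expR (- (c * (u + beta) ^+ 2 + q) / 2) = gf c beta u * e.
      by rewrite /gf /e -expRD; congr expR; ring.
    have hu : `|u| <= `|u + beta| + `|beta|.
      by have := ler_normB (u + beta) beta; rewrite addrK.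
    have key : k ord0 * `|u| + T <= S2 + k ord0 * `|u + beta|.
      rewrite HS; have := k0 ord0; nra.
    have gg := gf_ge0 c beta u.
    have -> : X * gf c beta u + Y * (gf c beta u * `|u + beta|) =
       (s * (gf c beta u * e)) * (A + (S2 + k ord0 * `|u + beta|)).
      by rewrite /X /Y; ring.
    apply: ler_wpM2l; first by rewrite mulr_ge0 // mulr_ge0.
    by rewrite lerD2l.
  rewrite (ge0_integralD leb measurableT f10 mf1 f20 mf2).
  have I1 : (\int[leb]_(u in [set: R]) (X%:E * (gf c beta u)%:E))%E = (X * gs c)%:E.
    rewrite ge0_integralZl //=.
    - by rewrite gf_integral // EFinM.
    - exact: mEFin mg.
    - by move=> u _; rewrite lee_fin gf_ge0.
  have I2 : (\int[leb]_(u in [set: R]) (Y%:E * (gf c beta u * `|u + beta|)%:E))%E =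
     (Y%:E * \int[leb]_(u in [set: R]) (gf c beta u * `|u + beta|)%:E)%E.
    rewrite ge0_integralZl //=.
    - exact: mEFin (measurable_funM mg mabs).
    - by move=> u _; rewrite lee_fin mulr_ge0 // gf_ge0.
  rewrite I1 I2.
  have Y0' : (0 <= Y%:E)%E by rewrite lee_fin.
  apply: (le_trans (leeD (lexx _) (lee_wpmul2l Y0' (gf_abs_integral c beta c0)))).
  rewrite -EFinM -EFinD lee_fin.
  have eK : Mc c * gs (c / 4) = K1 * gs c by rewrite /K1 divfK // gt_eqF.
  rewrite eK /X /Y le_eqVlt; apply/orP; left; apply/eqP; ring.
apply: (le_trans (HK' (s * gs c) (A + k ord0 * K1) (mulr_ge0 s0 (ltW gs0))
   (addr_ge0 A0 (mulr_ge0 (k0 ord0) K10)))).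
have eq : gs c * Num.sqrt ((pi *+ 2) ^+ n / \det (Sm P)) =
    Num.sqrt ((pi *+ 2) ^+ n.+1 / \det P).
  rewrite (Sm_det _ _ Ps (lt0r_neq0 c0)) -/c /gs -sqrtrM; last first.
    by apply: divr_ge0; [apply: mulrn_wge0; exact: pi_ge0 | exact: ltW].
  by congr Num.sqrt; rewrite exprS invfM; ring.
rewrite lee_fin -eq le_eqVlt; apply/orP; left; apply/eqP; ring.
Qed.

Lemma cos_near_pihalf (a : R) : 0 < a ->
  exists2 e : R, 0 < e & forall t, `|pi / 2 - t| < e -> `|cos t| <= a.
Proof.
move=> a0.
have := @continuous_cos R (pi / 2).
move=> /cvgrPdist_le /(_ a a0); rewrite cos_pihalf => -[e /= e0 He].
exists e => // t Ht; have := He t; rewrite sub0r normrN; apply.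
by rewrite /ball /=.
Qed.

Lemma shrink_bound d (rho : 'rV[R]_d -> R) x w t n a b : a <= b ->
  (0 <= shrink rho x w t (fun y => (enorm y)%:E) n a b)%E /\
  (shrink rho x w t (fun y => (enorm y)%:E) n a b <= (enorm x + enorm w)%:E)%E.
Proof.
have NW0 : 0 <= enorm x + enorm w by rewrite addr_ge0 ?enorm_ge0.
elim: n a b => [|n IH] a b ab /=.
  by split => //; rewrite lee_fin.
have hb : forall th : R, [set` `[a, b]] th ->
   (0 <= (if (t <= rho (ellipse x w th))%R then (enorm (ellipse x w th))%:E
          else if (th < 0)%R then shrink rho x w t (fun y => (enorm y)%:E) n th b
          else shrink rho x w t (fun y => (enorm y)%:E) n a th))%E /\
   ((if (t <= rho (ellipse x w th))%R then (enorm (ellipse x w th))%:E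
          else if (th < 0)%R then shrink rho x w t (fun y => (enorm y)%:E) n th b
          else shrink rho x w t (fun y => (enorm y)%:E) n a th) <= (enorm x + enorm w)%:E)%E.
  move=> th; rewrite /= in_itv /= => /andP[ath thb].
  case: ifP => _; first by split; rewrite lee_fin ?enorm_ge0 ?enorm_ell_le.
  by case: ifP => _; apply: IH.
split.
  apply: mule_ge0; first by rewrite lee_fin invr_ge0 subr_ge0.
  by apply: integral_ge0 => th /hb[].
apply: (@le_trans _ _ (((b - a)^-1)%:E *
   \int[leb]_(th in [set` `[a, b]]) (enorm x + enorm w)%:E)%E).
  apply: lee_wpmul2l; first by rewrite lee_fin invr_ge0 subr_ge0.
  by apply: le_int_ge0 => th /hb[].
rewrite integral_cst /=; last exact: measurable_itv.
rewrite lebesgue_measure_itv /= lte_fin.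
case: ltP => ab'; last by rewrite !mule0 lee_fin.
rewrite -EFinD -!EFinM lee_fin mulrCA mulVf ?mulr1 //.
by rewrite subr_eq0 gt_eqF.
Qed.

Definition Dv d (alpha R0 : R) (x w : 'rV[R]_d) : R :=
  if (R0 < enorm x) && (enorm w <= alpha * enorm x / 2)
  then enorm x + enorm w - alpha * enorm x else 0.
Arguments Dv {d}.

Lemma indic01 (A : set R) th : 0 <= (\1_A th : R) <= 1.
Proof. by rewrite indicE; case: (th \in A); rewrite ?mulr1n ?mulr0n ?lexx ?ler01. Qed.

Lemma ess_run_bound d (rho : 'rV[R]_d -> R) (alpha R0 beta : R) x w t n :
  (R0 < enorm x -> eball 0 (alpha * enorm x) `<=` Glevel rho (rho x)) ->
  0 < alpha -> alpha <= 1 -> 0 < beta -> beta <= 1/2 ->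
  (forall th, `|pi / 2 - th| <= beta -> `|cos th| <= alpha / 2) ->
  t <= rho x ->
  (0 <= ess_run rho x w t (fun y => (enorm y)%:E) n)%E /\
  (ess_run rho x w t (fun y => (enorm y)%:E) n <=
     (enorm x + enorm w - beta / pi * Dv alpha R0 x w)%:E)%E.
Proof.
move=> Hball a0 a1 b0 b1 Hcos tr.
have N0 : 0 <= enorm x := enorm_ge0 _ x.
have W0 : 0 <= enorm w := enorm_ge0 _ w.
have D0 : 0 <= Dv alpha R0 x w.
  by rewrite /Dv; case: ifP => // _; nra.
have DNW : Dv alpha R0 x w <= enorm x + enorm w.
  by rewrite /Dv; case: ifP => // _; nra.
set N := enorm x in N0 DNW *; set W := enorm w in W0 DNW *.
set D := Dv alpha R0 x w in D0 DNW *.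
pose I := `[pi / 2 - beta, pi / 2 + beta].
have pi2 : 2 <= pi :> R := pi_ge2 R.
have p2 : 0 < pi *+ 2 :> R by rewrite mulr2n; lra.
have IJ : [set` I] `<=` [set` `[0%R, (pi *+ 2 : R)%R]].
  move=> th; rewrite /= !in_itv /= => /andP[h1 h2]; apply/andP; split;
    rewrite ?mulr2n; lra.
have hb : forall th : R, [set` `[0%R, (pi *+ 2 : R)%R]] th ->
   (0 <= (if (t <= rho (ellipse x w th))%R then (enorm (ellipse x w th))%:E
          else shrink rho x w t (fun y => (enorm y)%:E) n (th - pi *+ 2) th))%E /\
   ((if (t <= rho (ellipse x w th))%R then (enorm (ellipse x w th))%:E
          else shrink rho x w t (fun y => (enorm y)%:E) n (th - pi *+ 2) th)
     <= (N + W - D * \1_[set` I] th)%:E)%E.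
  move=> th; rewrite /= in_itv /= => /andP[th0 th2pi].
  have hth : th - pi *+ 2 <= th by rewrite lerBlDr lerDl ltW.
  have [sh0 shb] := shrink_bound d rho x w t n (th - pi *+ 2) th hth.
  have ellb := enorm_ell_le _ x w th.
  have ell0 := enorm_ge0 _ (ellipse x w th).
  split; first by case: ifP => _ //; rewrite lee_fin.
  have [inI|notI] := boolP (th \in I).
    rewrite indicE (mem_set (inI : [set` I] th)) mulr1n.
    have [P|P] := boolP ((R0 < N) && (W <= alpha * N / 2)).
      have eD : D = N + W - alpha * N by rewrite /D /Dv -/N -/W P.
      move/andP: P => [PR PW].
      have hc : `|cos th| <= alpha / 2.
        apply: Hcos; move: inI; rewrite in_itv /= => /andP[i1 i2].
        rewrite ler_norml; apply/andP; split; lra.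
      have hs := sin_max th.
      have small : enorm (ellipse x w th) <= alpha * N.
        apply: (le_trans (enorm_ell _ _ _ _)); rewrite -/N -/W.
        have : 0 <= `|cos th| by [].
        have : 0 <= `|sin th| by [].
        nra.
      have tl : (t <= rho (ellipse x w th))%R.
        apply: (le_trans tr); have := Hball PR (ellipse x w th).
        by rewrite /eball /Glevel /=; apply; rewrite subr0.
      rewrite tl lee_fin eD; lra.
    have eD : D = 0 by rewrite /D /Dv -/N -/W (negbTE P).
    rewrite eD mul0r subr0.
    by case: ifP => _; [rewrite lee_fin | exact: shb].
  have nI : ~ [set` I] th by move=> h; move/negP: notI; apply.
  rewrite indicE (memNset nI) mulr0n mulr0 subr0.
  by case: ifP => _; [rewrite lee_fin | exact: shb].
rewrite /ess_run.
have pi0 : ((0:R)%:E <= ((pi *+ 2)^-1)%:E)%E by rewrite lee_fin invr_ge0 ltW.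
split.
  apply: mule_ge0 => //.
  by apply: integral_ge0 => th /hb[].
have H1 := @le_int_ge0 _ _ leb _ _ _ (fun th h => (hb th h).1) (fun th h => (hb th h).2).
apply: (le_trans (lee_wpmul2l pi0 H1)).
have mI : measurable [set` I] := measurable_itv I.
have mJ : measurable [set` `[0%R, (pi *+ 2 : R)%R]] := measurable_itv _.
have mind : measurable_fun [set: R] (\1_[set` I] : R -> R) := measurable_indic mI.
have G0 : forall th, [set` `[0%R, (pi *+ 2 : R)%R]] th -> (0 <= (N + W - D * \1_[set` I] th)%:E)%E.
  move=> th _; rewrite lee_fin; have /andP[i0 i1] := indic01 [set` I] th; nra.
have DI0 : forall th, [set` `[0%R, (pi *+ 2 : R)%R]] th -> (0 <= (D * \1_[set` I] th)%:E)%E.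
  move=> th _; rewrite lee_fin; have /andP[i0 i1] := indic01 [set` I] th; nra.
have mG : measurable_fun [set` `[0%R, (pi *+ 2 : R)%R]] (fun th => (N + W - D * \1_[set` I] th)%:E).
  apply: measurable_funTS; exact: mEFin (measurable_funB (measurable_cst _)
     (measurable_funM (measurable_cst _) mind)).
have mDI : measurable_fun [set` `[0%R, (pi *+ 2 : R)%R]] (fun th => (D * \1_[set` I] th)%:E).
  apply: measurable_funTS; exact: mEFin (measurable_funM (measurable_cst _) mind).
have E3 : (\int[leb]_(th in [set` `[0%R, (pi *+ 2 : R)%R]]) (N + W)%:E)%E =
   (\int[leb]_(th in [set` `[0%R, (pi *+ 2 : R)%R]]) (N + W - D * \1_[set` I] th)%:E +
    \int[leb]_(th in [set` `[0%R, (pi *+ 2 : R)%R]]) (D * \1_[set` I] th)%:E)%E.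
  rewrite -(ge0_integralD leb mJ G0 mG DI0 mDI).
  by apply: eq_integral => th _; rewrite -EFinD subrK.
have E1 : (\int[leb]_(th in [set` `[0%R, (pi *+ 2 : R)%R]]) (N + W)%:E)%E = ((N + W) * (pi *+ 2))%:E.
  rewrite integral_cst //= lebesgue_measure_itv /= lte_fin p2.
  by rewrite -EFinD -EFinM oppr0 addr0.
have E2 : (\int[leb]_(th in [set` `[0%R, (pi *+ 2 : R)%R]]) (D * \1_[set` I] th)%:E)%E =
    (D * (beta *+ 2))%:E.
  under eq_integral do rewrite EFinM.
  rewrite ge0_integralZl //.
  - rewrite integral_indic // setIidl //.
    rewrite /= lebesgue_measure_itv /= lte_fin.
    have -> : pi / 2 - beta < pi / 2 + beta by lra.
    by rewrite -EFinD -EFinM; congr EFin; rewrite mulr2n; congr (_ * _); lra.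
  - apply: measurable_funTS; exact: mEFin mind.
rewrite E1 E2 in E3.
have -> : (\int[leb]_(th in [set` `[0%R, (pi *+ 2 : R)%R]]) (N + W - D * \1_[set` I] th)%:E)%E =
   ((N + W) * (pi *+ 2) - D * (beta *+ 2))%:E.
  by rewrite EFinB E3 addeK.
rewrite -EFinM lee_fin le_eqVlt; apply/orP; left; apply/eqP.
have pp := pi_gt0 R.
move: pp; generalize (pi : R) => p p0.
rewrite !mulr2n; field.
by rewrite !gt_eqF //; lra.
Qed.
End aux.

Arguments posq {R n}.
Arguments quad {R n}.
Arguments Dv {R d}.

Lemma B_le {R : realType} (alpha R0 beta N W : R) : 0 < alpha -> alpha < 1 -> 0 < beta ->
  0 < R0 -> 0 <= N -> 0 <= W ->
  N + W - beta / pi * (if (R0 < N) && (W <= alpha * N / 2) then N + W - alpha * N else 0)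
  <= (1 - beta / pi * (1 - alpha)) * N + beta / pi * (1 - alpha) * R0
     + (1 + 2 * (beta / pi * (1 - alpha)) / alpha) * W.
Proof.
move=> a0 a1 b0 R00 N0 W0.
have bp0 : 0 < beta / pi by rewrite divr_gt0 // pi_gt0.
move: bp0; set bp := beta / pi => bp0.
set c := bp * (1 - alpha).
have c0 : 0 <= c by apply: mulr_ge0; [exact: ltW | rewrite subr_ge0 ltW].
set q := 2 * c / alpha.
have q0 : 0 <= q by apply: divr_ge0; [apply: mulr_ge0 | exact: ltW].
have qW : 0 <= q * W by apply: mulr_ge0.
have cR : 0 <= c * R0 by apply: mulr_ge0 => //; exact: ltW.
have bW : 0 <= bp * W by apply: mulr_ge0 => //; exact: ltW.
case: ifP => [/andP[h1 h2]|h].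
  have -> : bp * (N + W - alpha * N) = c * N + bp * W by rewrite /c; ring.
  nra.
rewrite mulr0 subr0.
have [NR|NR] := leP N R0.
  have : c * N <= c * R0 by rewrite ler_wpM2l.
  nra.
have hW : alpha * N / 2 < W.
  by move: h; rewrite NR /= => /negbT; rewrite -ltNge.
have hN : N <= 2 * W / alpha.
  rewrite ler_pdivlMr //; rewrite ltr_pdivrMr // in hW; lra.
have : c * N <= q * W.
  have -> : q * W = c * (2 * W / alpha) by rewrite /q; ring.
  by rewrite ler_wpM2l.
nra.
Qed.

Lemma posdef_unit {R : realType} d (C : 'M[R]_d) : sym_posdef C -> C \in unitmx.
Proof.
move=> [Cs Cp]; rewrite unitmxE unitfE; apply/negP => /det0P [v v0 vC].
by have := Cp v v0; rewrite vC mul0mx mxE ltxx.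
Qed.

Lemma posq_inv {R : realType} d (C : 'M[R]_d) : sym_posdef C ->
  posq (invmx C) /\ (invmx C)^T = invmx C.
Proof.
move=> HC; have Cu := posdef_unit _ _ HC; case: HC => Cs Cp.
have Ps : (invmx C)^T = invmx C by rewrite trmx_inv Cs.
split => // v hv.
set y := \row_(i < d) v i in hv *.
rewrite /quad -/y.
have z0 : y *m invmx C != 0.
  apply/negP => /eqP hz; move/negP: hv; apply; apply/eqP.
  by rewrite -(mulmxKV Cu y) hz mul0mx.
have := Cp _ z0.
by rewrite (mulmxKV Cu) trmx_mul Ps mulmxA.
Qed.

Theorem lemma1 (R : realType) (d : nat) (C : 'M[R]_d)
  (rho : 'rV[R]_d -> R) :
  sym_posdef C ->
  measurable_fun [set: 'rV[R]_d] rho ->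
  (forall x, 0 < rho x) ->
  (exists (alpha : R) (R0 : R),
      [/\ 0 < alpha, alpha <= (Num.sqrt 2)^-1, 0 < R0 &
       forall x : 'rV[R]_d, R0 < enorm x ->
         eball 0 (alpha * enorm x) `<=` Glevel rho (rho x)]) ->
  exists (delta L : R),
    [/\ 0 <= delta, delta < 1, 0 <= L &
     forall x : 'rV[R]_d,
       (ess_kernel_int C rho x (fun y => (enorm y)%:E) <= (delta * enorm x + L)%:E)%E].
Proof.
move=> HC _ rho0 [alpha [R0 [a0 aS R00 Hball]]].
have s2 : 1 < Num.sqrt 2 :> R by rewrite -[X in X < _]sqrtr1 ltr_sqrt; lra.
have a1 : alpha < 1.
  apply: (le_lt_trans aS); rewrite invf_lt1 //; exact: lt_trans s2.
have a2 : 0 < alpha / 2 by rewrite divr_gt0.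
have [e e0 He] := cos_near_pihalf _ a2.
have [beta [b0 [b1 be]]] : exists beta : R, [/\ 0 < beta, beta <= 1/2 & beta < e].
  by case: (ltP (e / 2) (1 / 2)) => h; [exists (e / 2) | exists (1 / 2)]; split; lra.
have Hcos : forall th, `|pi / 2 - th| <= beta -> `|cos th| <= alpha / 2.
  by move=> th h; apply: He; exact: le_lt_trans h be.
have pi1 : 1 <= pi :> R by have := pi_ge2 R; lra.
have bp0 : 0 < beta / pi by rewrite divr_gt0 // pi_gt0.
have bp1 : beta / pi <= beta.
  by rewrite ler_pdivrMr ?pi_gt0 //; nra.
set c := beta / pi * (1 - alpha).
have c0 : 0 < c by rewrite /c mulr_gt0 // subr_gt0.
have c1 : c <= 1 / 2 by rewrite /c; nra.
set K := 1 + 2 * c / alpha.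
have q0 : 0 <= 2 * c / alpha by apply: divr_ge0; [lra | exact: ltW].
have K0 : 0 <= K by rewrite /K; lra.
have [Pq Ps] := posq_inv _ _ HC.
have [K' [K'0 HK']] := GL _ (invmx C) Ps Pq (fun _ => K) (fun _ => K0).
exists (1 - c), (c * R0 + K'); split.
- by rewrite subr_ge0; lra.
- by rewrite ltrBlDr ltrDl.
- by apply: addr_ge0 => //; apply: mulr_ge0; lra.
move=> x.
have N0 : 0 <= enorm x := enorm_ge0 _ x.
set N := enorm x in N0 *.
set A := (1 - c) * N + c * R0.
have A0 : 0 <= A by rewrite /A; apply: addr_ge0; apply: mulr_ge0; lra.
have inner : forall w : 'rV[R]_d,
  (0 <= ((rho x)^-1)%:E * \int[lebesgue_measure]_(t in [set` `[0%R, rho x]])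
      ereal_sup (range (fun n => ess_run rho x w t (fun y => (enorm y)%:E) n)))%E /\
  (((rho x)^-1)%:E * \int[lebesgue_measure]_(t in [set` `[0%R, rho x]])
      ereal_sup (range (fun n => ess_run rho x w t (fun y => (enorm y)%:E) n))
    <= (A + K * enorm w)%:E)%E.
  move=> w.
  set B := N + enorm w - beta / pi * Dv alpha R0 x w.
  have hsup : forall t, [set` `[0%R, rho x]] t ->
     (0 <= ereal_sup (range (fun n => ess_run rho x w t (fun y => (enorm y)%:E) n)))%E /\
     (ereal_sup (range (fun n => ess_run rho x w t (fun y => (enorm y)%:E) n)) <= B%:E)%E.
    move=> t; rewrite /= in_itv /= => /andP[t0 tr].
    have H n := ess_run_bound _ rho alpha R0 beta x w t n (Hball x) a0 (ltW a1) b0 b1 Hcos tr.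
    split.
      apply: le_trans (H 0%N).1 _; apply: ereal_sup_ubound; by exists 0%N.
    by apply: ge_ereal_sup => _ [n _ <-]; exact: (H n).2.
  have rx := rho0 x.
  have rxi : ((0:R)%:E <= ((rho x)^-1)%:E)%E by rewrite lee_fin invr_ge0 ltW.
  split.
    apply: mule_ge0 => //.
    by apply: integral_ge0 => t /hsup[].
  have H1 := @le_int_ge0 _ _ _ lebesgue_measure _ _ _ (fun t h => (hsup t h).1) (fun t h => (hsup t h).2).
  apply: (le_trans (lee_wpmul2l rxi H1)).
  rewrite integral_cst //= lebesgue_measure_itv /= lte_fin rx -EFinD -!EFinM lee_fin oppr0 addr0.
  rewrite mulrCA mulVf ?gt_eqF // mulr1 /B /A /K /c /Dv -/N.
  apply: B_le => //; exact: enorm_ge0.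
rewrite /ess_kernel_int /gauss_int /leb_int_rV.
set s := (Num.sqrt ((pi *+ 2) ^+ d * \det C))^-1.
have s0 : 0 <= s by rewrite invr_ge0 sqrtr_ge0.
have Hfin : ((s * Num.sqrt ((pi *+ 2) ^+ d / \det (invmx C)) * (A + K'))%:E <=
    ((1 - c) * N + (c * R0 + K'))%:E)%E.
  rewrite lee_fin det_inv invrK.
  have hs : s * Num.sqrt ((pi *+ 2) ^+ d * \det C) <= 1.
    rewrite /s; set X := Num.sqrt _; have [->|X0] := eqVneq X 0.
      by rewrite mulr0 ler01.
    by rewrite mulVf.
  apply: (le_trans (ler_wpM2r (addr_ge0 A0 K'0) hs)); rewrite mul1r /A; lra.
apply: (le_trans _ (le_trans (HK' s A s0 A0) Hfin)).
apply: iter_le => v.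
  apply: mule_ge0; first by rewrite lee_fin /gauss_density mulr_ge0 ?expR_ge0.
  exact: (inner _).1.
have [_ hb] := inner (\row_(i < d) v i).
have g0 : ((0:R)%:E <= (gauss_density C (\row_(i < d) v i))%:E)%E.
  by rewrite lee_fin /gauss_density mulr_ge0 ?expR_ge0.
apply: (le_trans (lee_wpmul2l g0 hb)).
rewrite -EFinM lee_fin /gauss_density -/s.
apply: ler_wpM2l; first by rewrite mulr_ge0 // expR_ge0.
rewrite lerD2l -mulr_sumr ler_wpM2l //.
apply: (le_trans (enorm_l1 _ _)); rewrite le_eqVlt; apply/orP; left; apply/eqP.
by apply: eq_bigr => i _; rewrite mxE.
Qed.
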